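(* Let $I$ be an ideal of $\mathbb{R}_{max}[x_1,\dots,x_n]$. Then the coordinate-wise symmetrization map $\varphi=s^n:(\mathbb{R}_{max})^n\longrightarrow (s(\mathbb{R}_{max}))^n$ induces a set bijection \[trop(V(I)):= \bigcap_{f\in I} trop(V(f)) \simeq \Big(\bigcap_{f\in I}HV(f)\Big) \bigcap \operatorname{Im}\varphi.\]
   Context: Let $M=\mathbb{R}_{max}=(\mathbb{R}\cup\{-\infty\},\max,+)$ be the tropical semifield (addition is $\max$, multiplication is the usual addition of reals), totally ordered by the usual order. Its symmetrization is $R=s(M)=\{(a,1),(a,-1)\mid a\in M\setminus\{-\infty\}\}\cup\{0\}$, where $0=(-\infty,1)=(-\infty,-1)$; write $(a,1)=a$, $(a,-1)=-a$, $|(a,\pm1)|=a$. The hyperaddition on $R$ is: $x+y=\{x\}$ if $|x|>|y|$ or $x=y$; $x+y=\{y\}$ if $|x|<|y|$; and $x+(-x)=\{(t,\pm1)\mid t\le |x|\}$. Multiplication is component-wise, $(a,p)(b,q)=(a+b,pq)$. With these operations $R$ is a hyperfield. Let $s:M\to R$, $a\mapsto (a,1)$, and $\varphi=s^n:M^n\to R^n$ coordinate-wise; $\varphi$ is injective. For a polynomial $g=\sum_I a_I X^I$ over the hyperfield $R$ (no repeated monomials) and $\alpha\in R^n$, the evaluation $g(\alpha)=\sum_I a_I\alpha^I$ is a subset of $R$. For $f\in M[x_1,\dots,x_n]$, fix a presentation $f=\sum_i m_i$ as a sum of distinct monomials, and set $\tilde f_{\hat i}:=\sum_{j\neq i}(m_j,1)+(m_i,-1)\in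 R[x_1,\dots,x_n]$ (identifying coefficients $a\in M$ with $(a,1)\in R$), $V(\tilde f_{\hat i}):=\{z\in R^n\mid 0\in \tilde f_{\hat i}(z)\}$, and $HV(f):=\bigcup_i V(\tilde f_{\hat i})$. The tropical hypersurface $trop(V(f))$ is the set of $a\in M^n$ (coordinates equal to $-\infty$ allowed) at which the maximum among the values of the monomials of $f$ is attained at least twice. It was shown earlier that $\varphi$ restricts to a bijection $trop(V(f))\simeq HV(f)\cap\operatorname{Im}\varphi$ for each single $f$. *)

(* Defs.v *)
From Stdlib Require Import Reals.
From mathcomp Require Import all_boot.

Set Implicit Arguments.
Unset Strict Implicit.
Unset Printing Implicit Defensive.

(* None encodes -oo.                                                  *)
Definition M := option R.

Definition tadd (x y : M) : M :=
  match x, y with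
  | None, _ => y
  | _, None => x
  | Some a, Some b => Some (Rmax a b)
  end.

Definition tmul (x y : M) : M :=
  match x, y with
  | Some a, Some b => Some (Rplus a b)
  | _, _ => None
  end.

Definition tone : M := Some R0.

Definition tle (x y : M) : Prop :=
  match x, y with
  | None, _ => True
  | Some _, None => False
  | Some a, Some b => Rle a b
  end.

Definition tlt (x y : M) : Prop :=
  match x, y with
  | None, Some _ => True
  | Some a, Some b => Rlt a b
  | _, _ => False
  end.

(* x ^ k in M (so x ^ 0 = 1_M even for x = -oo) *)
Definition tpow (x : M) (k : nat) : M := iter k (tmul x) tone.

(* An exponent is a vector in N^n; a polynomial is a finitely         *)
(* supported coefficient function (coefficient -oo = absent monomial). *)
Definition expo (n : nat) := {ffun 'I_n -> nat}.

Definition tpoly (n : nat) := expo n -> M.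

Definition finsupp n (f : tpoly n) : Prop :=
  exists s : seq (expo n), forall e, f e <> None -> e \in s.

Definition tpzero n : tpoly n := fun _ => None.

Definition tpadd n (f g : tpoly n) : tpoly n := fun e => tadd (f e) (g e).

(* product: coefficient of x^K is  max_{I + J = K} g_I + f_J ;
   I ranges over the exponents componentwise <= K *)
Definition tpmul n (g f : tpoly n) : tpoly n := fun K =>
  \big[tadd/None]_(I : {ffun 'I_n -> 'I_((\max_(i < n) K i).+1)}
                   | [forall i, (I i <= K i)%N])
     tmul (g [ffun i => nat_of_ord (I i)]) (f [ffun i => (K i - I i)%N]).

Record is_ideal n (I : tpoly n -> Prop) : Prop := {
  ideal_poly : forall f, I f -> finsupp f;
  ideal_zero : I (@tpzero n);
  ideal_add  : forall f g, I f -> I g -> I (tpadd f g);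
  ideal_mul  : forall f g, I f -> finsupp g -> I (tpmul g f)
}.

Definition tmono n (a : 'I_n -> M) (e : expo n) : M :=
  \big[tmul/tone]_(i < n) tpow (a i) (e i).

Definition tval n (f : tpoly n) (a : 'I_n -> M) (e : expo n) : M :=
  tmul (f e) (tmono a e).

(* tropical hypersurface trop(V(f)): the maximum of the values of the
   monomials of f is attained at least twice (or the maximum is -oo,
   i.e. f(a) = -oo) *)
Definition tropV n (f : tpoly n) (a : 'I_n -> M) : Prop :=
  (forall e, f e <> None -> tval f a e = None) \/
  exists e1 e2, e1 <> e2 /\ f e1 <> None /\ f e2 <> None /\
    tval f a e1 = tval f a e2 /\
    forall e, f e <> None -> tle (tval f a e) (tval f a e1).

(* S0 = 0 = (-oo, +-1);  Sg a true = (a, 1);  Sg a false = (a, -1).   *)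
Inductive sym : Type :=
| S0 : sym
| Sg : R -> bool -> sym.

Definition sabs (x : sym) : M :=
  match x with S0 => None | Sg a _ => Some a end.

Definition sneg (x : sym) : sym :=
  match x with S0 => S0 | Sg a p => Sg a (~~ p) end.

Definition smul (x y : sym) : sym :=
  match x, y with
  | Sg a p, Sg b q => Sg (Rplus a b) (p == q)
  | _, _ => S0
  end.

Definition sone : sym := Sg R0 true.

Definition spow (x : sym) (k : nat) : sym := iter k (smul x) sone.

(* hyperaddition: hadd x y is the subset x + y of s(M) *)
Definition hadd (x y : sym) (z : sym) : Prop :=
  ((tlt (sabs y) (sabs x) \/ x = y) /\ z = x) \/
  (tlt (sabs x) (sabs y) /\ z = y) \/
  (y = sneg x /\ tle (sabs z) (sabs x)).

Fixpoint hsum (l : seq sym) : sym -> Prop :=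
  match l with
  | [::] => fun z => z = S0
  | x :: l' => fun z => exists w, hsum l' w /\ hadd x w z
  end.

Definition sM (x : M) : sym :=
  match x with None => S0 | Some a => Sg a true end.

Definition phi n (a : 'I_n -> M) : 'I_n -> sym := fun i => sM (a i).

Definition smono n (z : 'I_n -> sym) (e : expo n) : sym :=
  \big[smul/sone]_(i < n) spow (z i) (e i).

Definition presentation n (f : tpoly n) (s : seq (expo n)) : Prop :=
  uniq s /\ forall e, e \in s <-> f e <> None.

(* evaluation of f~_{\hat i} (the sign of the monomial x^ei flipped)
   at z, a subset of s(M) *)
Definition ftilde_eval n (f : tpoly n) (s : seq (expo n)) (ei : expo n)
    (z : 'I_n -> sym) : sym -> Prop :=
  hsum [seq smul ((if e == ei then sneg else id) (sM (f e))) (smono z e)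
       | e <- s].

Definition Vtilde n (f : tpoly n) (s : seq (expo n)) (ei : expo n)
    (z : 'I_n -> sym) : Prop :=
  ftilde_eval f s ei z S0.

Definition HV n (f : tpoly n) (s : seq (expo n)) (z : 'I_n -> sym) : Prop :=
  exists2 ei, ei \in s & Vtilde f s ei z.

Definition tropVI n (I : tpoly n -> Prop) (a : 'I_n -> M) : Prop :=
  forall f, I f -> tropV f a.

Definition HVI n (I : tpoly n -> Prop) (z : 'I_n -> sym) : Prop :=
  forall f, I f -> f <> @tpzero n ->
    forall s, presentation f s -> HV f s z.

Definition Imphi n (z : 'I_n -> sym) : Prop := exists a, z = phi a.

(* Main.v *)
Require Import Defs.
From Stdlib Require Import Reals.
From mathcomp Require Import all_boot.
From Stdlib Require Import Lra Classical FunctionalExtensionality.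

Set Implicit Arguments.
Unset Strict Implicit.
Unset Printing Implicit Defensive.

Lemma tle_refl x : tle x x.
Proof. by case: x => [a|] //=; apply: Rle_refl. Qed.

Lemma tle_trans x y z : tle x y -> tle y z -> tle x z.
Proof. case: x => [a|]; case: y => [b|]; case: z => [c|] //=; lra. Qed.

Lemma tlt_tle x y : tlt x y -> tle x y.
Proof. case: x => [a|]; case: y => [b|] //=; lra. Qed.

Lemma tle_tlt_trans x y z : tle x y -> tlt y z -> tlt x z.
Proof. case: x => [a|]; case: y => [b|]; case: z => [c|] //=; lra. Qed.

Lemma tlt_irr x : ~ tlt x x.
Proof. case: x => [a|] //=; lra. Qed.

Lemma tlt_asym x y : tlt x y -> tlt y x -> False.
Proof. case: x => [a|]; case: y => [b|] //=; lra. Qed.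

Lemma tle_or_tlt x y : tle x y \/ tlt y x.
Proof.
case: x => [a|]; case: y => [b|] /=; try by [left|right].
case: (Rle_or_lt a b) => H; [left|right] => //.
Qed.

Lemma tlt_trich x y : tlt x y \/ x = y \/ tlt y x.
Proof.
case: x => [a|]; case: y => [b|] /=; try by [left|right;left|right;right].
case: (Rtotal_order a b) => [H|[H|H]].
- by left.
- by right; left; rewrite H.
- by right; right.
Qed.

Lemma tle_neq_tlt x y : tle x y -> x <> y -> tlt x y.
Proof.
case: x => [a|]; case: y => [b|] /= H Hn //; try by case: Hn.
case: (Rle_lt_or_eq_dec _ _ H) => // Hab; by case: Hn; rewrite Hab.
Qed.

Lemma tle_None x : tle x None -> x = None.
Proof. by case: x. Qed.

Lemma sabs_sneg x : sabs (sneg x) = sabs x.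
Proof. by case: x. Qed.

Lemma smul_snegl x y : smul (sneg x) y = sneg (smul x y).
Proof. by case: x => [|a p]; case: y => [|b q] //=; case: p; case: q. Qed.

Lemma sM_mul x y : sM (tmul x y) = smul (sM x) (sM y).
Proof. by case: x => [a|]; case: y => [b|]. Qed.

Lemma spow_sM x k : spow (sM x) k = sM (tpow x k).
Proof.
rewrite /spow /tpow; elim: k => [|k IH] //=.
by rewrite IH -sM_mul.
Qed.

Lemma smono_phi n (a : 'I_n -> M) e : smono (phi a) e = sM (tmono a e).
Proof.
rewrite /smono /tmono (big_morph sM sM_mul (erefl _)).
by apply: eq_bigr => i _; rewrite spow_sM.
Qed.

Definition tterm n (f : tpoly n) (a : 'I_n -> M) (ei e : expo n) : sym :=
  (if e == ei then sneg else id) (sM (Defs.tval f a e)).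

Lemma sabs_tterm n (f : tpoly n) a ei e : sabs (tterm f a ei e) = Defs.tval f a e.
Proof. rewrite /tterm; case: ifP => _; rewrite ?sabs_sneg; by case: Defs.tval. Qed.

Lemma ftilde_map n (f : tpoly n) s ei a :
  ftilde_eval f s ei (phi a) = hsum [seq tterm f a ei e | e <- s].
Proof.
rewrite /ftilde_eval; congr hsum; apply: eq_map => e.
rewrite smono_phi /tterm /Defs.tval sM_mul; case: (e == ei) => //=.
by rewrite smul_snegl.
Qed.

Lemma hsum_nonempty (l : seq sym) : exists w, hsum l w.
Proof.
elim: l => [|x l [w Hw]]; first by exists S0.
have [z Hz] : exists z, hadd x w z.
  case: (tlt_trich (sabs x) (sabs w)) => [H|[H|H]].
  - by exists w; right; left.
  - case: x H => [|a p]; case: w {Hw} => [|b q] //= H.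
    + by exists S0; left; split; [right|].
    + case: H => ->; case: p; case: q.
      * by exists (Sg b true); left; split; [right|].
      * by exists S0; right; right.
      * by exists S0; right; right.
      * by exists (Sg b false); left; split; [right|].
  - by exists x; left; split; [left|].
by exists z; exists w.
Qed.

Lemma hsum_lt (T : eqType) (t : T -> sym) (l : seq T) b z :
  (forall e, e \in l -> tlt (sabs (t e)) (Some b)) ->
  hsum (map t l) z -> tlt (sabs z) (Some b).
Proof.
elim: l z => [|x l IH] z Hl /=; first by move=> ->.
move=> [w [Hw Hh]].
have Hx := Hl x (mem_head _ _).
have Hw' : tlt (sabs w) (Some b).
  by apply: (IH w) Hw => e He; apply: Hl; rewrite in_cons He orbT.
case: Hh => [[_ ->]|[[_ ->]|[_ Hz]]] //.
exact: tle_tlt_trans Hz Hx.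
Qed.

Lemma hsum_unique (T : eqType) (t : T -> sym) (l1 l2 : seq T) x0 b z :
  sabs x0 = Some b ->
  (forall e, e \in l1 -> tlt (sabs (t e)) (Some b)) ->
  (forall e, e \in l2 -> tlt (sabs (t e)) (Some b)) ->
  hsum (map t l1 ++ x0 :: map t l2) z -> z = x0.
Proof.
move=> Hx0 H1 H2; elim: l1 z H1 => [|x l1 IH] z H1 /=.
- move=> [w [Hw Hh]]. have Hw' := hsum_lt H2 Hw. rewrite -Hx0 in Hw'.
  case: Hh => [[_ ->]//|[[H _]|[Hs _]]].
  + by case: (tlt_asym H Hw').
  + by rewrite Hs sabs_sneg in Hw'; case: (tlt_irr Hw').
- move=> [w [Hw Hh]].
  have Hwx : w = x0.
    by apply: (IH w) Hw => e He; apply: H1; rewrite in_cons He orbT.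
  have Hx := H1 x (mem_head _ _). rewrite -Hx0 in Hx.
  rewrite Hwx in Hh.
  case: Hh => [[[H|H] _]|[[_ ->]//|[Hs _]]].
  + by case: (tlt_asym H Hx).
  + by rewrite H in Hx; case: (tlt_irr Hx).
  + by rewrite Hs sabs_sneg in Hx; case: (tlt_irr Hx).
Qed.

Lemma hsum_allS0 (T : eqType) (t : T -> sym) (l : seq T) :
  (forall e, e \in l -> t e = S0) -> hsum (map t l) S0.
Proof.
elim: l => [|x l IH] H //=.
exists S0; split; first by apply: IH => e He; apply: H; rewrite in_cons He orbT.
rewrite (H x (mem_head _ _)); by left; split; [right|].
Qed.

Lemma hsum_E (T : eqType) (t : T -> sym) (l : seq T) b q e1 :
  e1 \in l -> t e1 = Sg b q ->
  (forall e, e \in l -> t e <> Sg b (~~ q)) ->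
  (forall e, e \in l -> tle (sabs (t e)) (Some b)) ->
  hsum (map t l) (Sg b q).
Proof.
elim: l e1 => [|x l IH] e1 He1 Ht Hn Hle; first by rewrite in_nil in He1.
have Hn' : forall e, e \in l -> t e <> Sg b (~~ q).
  by move=> e He; apply: Hn; rewrite in_cons He orbT.
have Hle' : forall e, e \in l -> tle (sabs (t e)) (Some b).
  by move=> e He; apply: Hle; rewrite in_cons He orbT.
have Hxle := Hle x (mem_head _ _). have Hxn := Hn x (mem_head _ _).
rewrite /=.
case: (classic (exists2 e, e \in l & t e = Sg b q)) => [[e He Hte]|Hno].
- exists (Sg b q); split; first exact: IH He Hte Hn' Hle'.
  move: Hxle Hxn; case: (t x) => [|c r] Hxle Hxn; first by right; left.
  case: (Rle_lt_or_eq_dec _ _ Hxle) => Hcb; first by right; left.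
  subst c; clear Hxle. case: r Hxn; case: q {Hn Hn' IH Ht Hte} => //= Hxn;
    by left; split; [right|].
- have Hx : t x = Sg b q.
    rewrite in_cons in He1; case/orP: He1 => [/eqP <- //|He].
    by exfalso; apply: Hno; exists e1.
  have Hlt : forall e, e \in l -> tlt (sabs (t e)) (Some b).
    move=> e He; have := Hle' e He; have := Hn' e He.
    case Hte: (t e) => [|c r] //= Hne Hce.
    case: (Rle_lt_or_eq_dec _ _ Hce) => // Hcb; subst c.
    case: (Bool.bool_dec r q) => [Hrq|Hrq].
    + by exfalso; apply: Hno; exists e => //; rewrite Hte Hrq.
    + exfalso; apply: Hne; f_equal; destruct r; destruct q; simpl; congruence.
  have [w Hw] := hsum_nonempty (map t l).
  exists w; split => //. have Hw' := hsum_lt Hlt Hw.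
  rewrite Hx; by left; split; [left|].
Qed.

Lemma hsum_D (T : eqType) (t : T -> sym) (l : seq T) b p e1 e2 :
  e1 \in l -> e2 \in l -> t e1 = Sg b p -> t e2 = Sg b (~~ p) ->
  (forall e, e \in l -> tle (sabs (t e)) (Some b)) ->
  forall z, tle (sabs z) (Some b) -> hsum (map t l) z.
Proof.
elim: l p e1 e2 => [|x l IH] p e1 e2 He1 He2 Ht1 Ht2 Hle z Hz;
  first by rewrite in_nil in He1.
have Hle' : forall e, e \in l -> tle (sabs (t e)) (Some b).
  by move=> e He; apply: Hle; rewrite in_cons He orbT.
have Hxle := Hle x (mem_head _ _).
have claim : (forall w, tle (sabs w) (Some b) -> hsum (map t l) w) \/
             (sabs (t x) = Some b /\ hsum (map t l) (sneg (t x))).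
  case: (boolP (e1 \in l)) => H1; case: (boolP (e2 \in l)) => H2.
  - by left => w Hw; exact: IH p e1 e2 H1 H2 Ht1 Ht2 Hle' w Hw.
  - have Htx : t x = Sg b (~~ p).
      rewrite in_cons (negbTE H2) orbF in He2; by rewrite -(eqP He2).
    case: (classic (exists2 e, e \in l & t e = Sg b (~~ p))) => [[e He Hte]|Hno].
    + by left => w Hw; exact: IH p e1 e H1 He Ht1 Hte Hle' w Hw.
    + right; rewrite Htx /= negbK; split => //.
      apply: (hsum_E H1 Ht1) => // e He Hte; apply: Hno; by exists e.
  - have Htx : t x = Sg b p.
      rewrite in_cons (negbTE H1) orbF in He1; by rewrite -(eqP He1).
    case: (classic (exists2 e, e \in l & t e = Sg b p)) => [[e He Hte]|Hno].
    + by left => w Hw; exact: IH p e e2 He H2 Hte Ht2 Hle' w Hw.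
    + right; rewrite Htx /=; split => //.
      apply: (hsum_E H2 Ht2) => // e He Hte; apply: Hno; exists e => //.
      by rewrite Hte negbK.
  - exfalso.
    rewrite in_cons (negbTE H1) orbF in He1.
    rewrite in_cons (negbTE H2) orbF in He2.
    move: Ht1 Ht2; rewrite (eqP He1) (eqP He2) => ->; by case: p.
rewrite /=; case: claim => [All|[Hsx Hs]].
- case: (tle_or_tlt (sabs z) (sabs (t x))) => H.
  + exists (sneg (t x)); split; last by right; right.
    by apply: All; rewrite sabs_sneg.
  + by exists z; split; [apply: All|right; left].
- exists (sneg (t x)); split => //; right; right; split => //.
  by rewrite Hsx.
Qed.

Lemma argmax' (T : eqType) (g : T -> M) x (s : seq T) :
  exists2 e1, e1 \in x :: s & forall e, e \in x :: s -> tle (g e) (g e1).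
Proof.
elim: s x => [|y s IH] x.
- exists x; first exact: mem_head.
  by move=> e; rewrite inE => /eqP ->; apply: tle_refl.
- have [e1 He1 Hmax] := IH y.
  case: (tle_or_tlt (g x) (g e1)) => Hc.
  + exists e1; first by rewrite in_cons He1 orbT.
    move=> e; rewrite in_cons => /orP [/eqP -> //|He]; exact: Hmax.
  + exists x; first exact: mem_head.
    move=> e; rewrite in_cons => /orP [/eqP ->|He]; first exact: tle_refl.
    exact: tle_trans (Hmax e He) (tlt_tle Hc).
Qed.

Lemma argmax (T : eqType) (g : T -> M) (s : seq T) x0 :
  x0 \in s -> exists2 e1, e1 \in s & forall e, e \in s -> tle (g e) (g e1).
Proof. case: s => [|x s]; [by rewrite in_nil | move=> _; exact: argmax']. Qed.

Lemma backward n (f : tpoly n) s a :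
  presentation f s -> HV f s (phi a) -> tropV f a.
Proof.
move=> [Hu Hs] [ei Hei HV]. rewrite /Vtilde ftilde_map in HV.
case: (classic (forall e, e \in s -> Defs.tval f a e = None)) => Hall.
  by left => e He; apply: Hall; apply/Hs.
have [e1 He1 Hmax] := argmax (Defs.tval f a) Hei.
have [b Hb] : exists b, Defs.tval f a e1 = Some b.
  case Hg: (Defs.tval f a e1) => [b|]; first by exists b.
  exfalso; apply: Hall => e He; have := Hmax e He; rewrite Hg; exact: tle_None.
case: (classic (exists e2, e2 \in s /\ e2 <> e1 /\ Defs.tval f a e2 = Defs.tval f a e1))
  => [[e2 [He2 [Hne Heq]]]|Hno].
  right; exists e1, e2; split; first by move=> H; apply: Hne.
  split; first by apply/Hs. split; first by apply/Hs.
  split; first by [].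
  by move=> e He; apply: Hmax; apply/Hs.
exfalso.
move: Hu HV Hno Hmax; case/splitPr: He1 => p1 p2 Hu HV Hno Hmax.
rewrite map_cat /= in HV.
have Hlt : forall e, e \in p1 ++ e1 :: p2 -> e != e1 ->
    tlt (sabs (tterm f a ei e)) (Some b).
  move=> e He Hne; rewrite sabs_tterm; apply: tle_neq_tlt.
    by rewrite -Hb; apply: Hmax.
  move=> Heq; apply: Hno; exists e; split => //; split; first exact/eqP.
  by rewrite Heq Hb.
have Hn1 : e1 \notin p1.
  apply/negP => H; move: Hu; rewrite cat_uniq => /and3P [_ /hasPn Hh _].
  by have := Hh e1 (mem_head _ _); rewrite H.
have Hn2 : e1 \notin p2.
  by move: Hu; rewrite cat_uniq => /and3P [_ _ /= /andP [H _]].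
have := hsum_unique (x0 := tterm f a ei e1) (b := b) _ _ _ HV.
rewrite sabs_tterm Hb => H.
have : S0 = tterm f a ei e1.
  apply: H => // e He.
  - apply: Hlt; first by rewrite mem_cat He.
    by apply/eqP => Heq; rewrite -Heq He in Hn1.
  - apply: Hlt; first by rewrite mem_cat in_cons He !orbT.
    by apply/eqP => Heq; rewrite -Heq He in Hn2.
move/(congr1 sabs); by rewrite sabs_tterm Hb.
Qed.

Lemma forward n (f : tpoly n) s a :
  presentation f s -> f <> @tpzero n -> tropV f a -> HV f s (phi a).
Proof.
move=> [Hu Hs] Hf0 Htr.
have Hzero : (forall e, e \in s -> Defs.tval f a e = None) -> HV f s (phi a).
  move=> Hall.
  have [e0 He0] : exists e0, f e0 <> None.
    apply: NNPP => H; apply: Hf0; apply: functional_extensionality => e.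
    rewrite /tpzero; apply: NNPP => He; apply: H; by exists e.
  exists e0; first by apply/Hs.
  rewrite /Vtilde ftilde_map; apply: hsum_allS0 => e He.
  by rewrite /tterm Hall //; case: ifP.
case: Htr => [Hall|[e1 [e2 [Hne [Hf1 [Hf2 [Heq Hmax]]]]]]].
  by apply: Hzero => e He; apply: Hall; apply/Hs.
case Hb: (Defs.tval f a e1) => [b|]; last first.
  apply: Hzero => e He; apply: tle_None; rewrite -Hb; apply: Hmax; by apply/Hs.
exists e1; first by apply/Hs.
rewrite /Vtilde ftilde_map.
apply: (@hsum_D _ _ _ b false e1 e2).
- by apply/Hs.
- by apply/Hs.
- by rewrite /tterm eqxx Hb.
- rewrite /tterm.
  have -> : (e2 == e1) = false by apply/eqP => H; apply: Hne.
  by rewrite /= -Heq Hb.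
- move=> e He; rewrite sabs_tterm -Hb; apply: Hmax; by apply/Hs.
- by [].
Qed.

Definition isdef (o : M) : bool := if o is Some _ then true else false.

Theorem proposition4p18 (n : nat) (I : tpoly n -> Prop) (hI : is_ideal I) :
  (forall a, tropVI I a -> HVI I (phi a) /\ Imphi (phi a)) /\
  (forall a b, tropVI I a -> tropVI I b -> phi a = phi b -> a = b) /\
  (forall z, HVI I z /\ Imphi z -> exists a, tropVI I a /\ phi a = z).
Proof.
split; [|split].
- move=> a Ha; split; last by exists a.
  move=> f If Hf0 s Hs; apply: forward => //; exact: Ha.
- move=> a b _ _ Hab; apply: functional_extensionality => i.
  have := congr1 (fun z => z i) Hab; rewrite /phi /=.
  case: (a i) => [x|]; case: (b i) => [y|] /= H; congruence.
- move=> z [HV [a Hz]]; subst z; exists a; split => //.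
  move=> f If; case: (classic (f = @tpzero n)) => [->|Hf0].
    by left => e H; case: H.
  have [s0 Hs0] := ideal_poly hI If.
  pose s := undup [seq e <- s0 | isdef (f e)].
  have Hp : presentation f s.
    split; first exact: undup_uniq.
    move=> e; rewrite mem_undup mem_filter; split.
      by move/andP => [H _]; case: (f e) H.
    move=> H; apply/andP; split; [by case: (f e) H | exact: Hs0].
  exact: (backward Hp (HV f If Hf0 s Hp)).
Qed.
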